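(* Let $\mathcal G=(\mathcal V,\mathcal E,W)$ be a network, $h\in\mathbb{R}^{\mathcal V}$, and consider the SNC game with binary actions on $\mathcal G$ with external field $h$, with set of Nash equilibria $\mathcal N$. Let $\mathcal V=\mathcal R\cup\mathcal S$, $\mathcal R\cap\mathcal S=\emptyset$, be a binary partition such that $\mathcal G_{\mathcal R}$ is unsigned. Let $h^-,h^+\in\mathbb{R}^{\mathcal R}$ be given by $h_i^+=h_i+w_i^{\mathcal S}$ and $h_i^-=h_i-w_i^{\mathcal S}$ for $i\in\mathcal R$. Assume $\mathcal G_{\mathcal R}$ is $(h^-,h^+)$-indecomposable and $$w_i^{\mathcal R}-|h_i|>w_i^{\mathcal S}\qquad\forall i\in\mathcal R.$$ Then: (i) if, for every $a\in\{\pm1\}$, the set $\mathcal N_{\mathcal S}^{(a\mathbf 1)}$ is globally BR-reachable for the $\mathcal S$-restricted game with strategy profile of players in $\mathcal R$ frozen to $a\mathbf 1$, then the set $\tilde{\mathcal N}=\{x^*\in\mathcal N:\ x^*_{\mathcal R}\in\{\mathbf 1,-\mathbf 1\}\}$ is nonempty and globally BR-reachable for the SNC game; (ii) if, for every $a\in\{\pm1\}$, there exists a nonempty subset $\bar{\mathcal N}_{\mathcal S}^{(a\mathbf 1)}\subseteq\mathcal N_{\mathcal S}^{(a\mathbf 1)}$ that is globally BR-stable for the $\mathcal S$-restricted game with strategy profile of players in $\mathcal R$ frozen to $a\mathbf 1$, then there exists a nonempty subset $\overline{\mathcal N}\subseteq\tilde{\mathcal N}$ that is globally BR-stable for the SNC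 game.
   Context: A network is a triple $\mathcal G=(\mathcal V,\mathcal E,W)$ where $\mathcal V$ is a finite nonempty set, $\mathcal E\subseteq\mathcal V\times\mathcal V$, and $W\in\mathbb{R}^{\mathcal V\times\mathcal V}$ has zero diagonal and satisfies $W_{ij}\neq0$ iff $(i,j)\in\mathcal E$ (weights may have either sign). It is unsigned if $W\ge0$ entrywise. For $\mathcal U\subseteq\mathcal V$, the subnetwork $\mathcal G_{\mathcal U}$ has node set $\mathcal U$, links $\mathcal E\cap(\mathcal U\times\mathcal U)$ and weight matrix $W_{\mathcal U\mathcal U}$. For $i\in\mathcal V$ and $\mathcal B\subseteq\mathcal V$, $w_i^{\mathcal B}=\sum_{j\in\mathcal B}|W_{ij}|$. $\mathbf 1$ is the all-ones vector. Indecomposability: a network with node set $\mathcal U$ and $h^-\le h^+$ in $\mathbb{R}^{\mathcal U}$ is $(h^-,h^+)$-indecomposable if for every partition $\mathcal U=\mathcal U^-\cup\mathcal U^+$ into two disjoint nonempty sets there is a node $i$ with either $i\in\mathcal U^+$ and $w_i^{\mathcal U^+}+h_i^+<w_i^{\mathcal U^-}$, or $i\in\mathcal U^-$ and $w_i^{\mathcal U^-}-h_i^-<w_i^{\mathcal U^+}$. The SNC game with binary actions on $\mathcal G$ with external field $h\in\mathbb{R}^{\mathcal V}$ has player set $\mathcal V$, action set $\{-1,+1\}$ for each player, strategy profiles $\mathcal X=\{\pm1\}^{\mathcal V}$ (written $x=(x_{\mathcal R},x_{\mathcal S})$), and utilities $u_i(x)=h_ix_i+x_i\sum_{j\in\mathcal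 V}W_{ij}x_j$. Best responses $\mathcal B_i(x_{-i})=\arg\max_{x_i\in\{\pm1\}}u_i(x_i,x_{-i})$; Nash equilibrium: $x^*_i\in\mathcal B_i(x^*_{-i})$ for all $i$. For $y\in\{\pm1\}^{\mathcal R}$, the $\mathcal S$-restricted game with strategy profile of players in $\mathcal R$ frozen to $y$ has player set $\mathcal S$, actions $\{\pm1\}$, and utilities $u_i^{(y)}(z)=u_i(y,z)$ for $i\in\mathcal S$, $z\in\{\pm1\}^{\mathcal S}$; $\mathcal N_{\mathcal S}^{(y)}$ is its set of Nash equilibria. For any game with binary actions and profile set $\mathcal Y$: a BR-path of length $l\ge0$ from $x$ to $y$ is a sequence $x^{(0)}=x,\dots,x^{(l)}=y$ such that for each $k$ some player $i_k$ has $x^{(k)}_{-i_k}=x^{(k-1)}_{-i_k}$ and $x^{(k)}_{i_k}\in\mathcal B_{i_k}(x^{(k-1)}_{-i_k})\setminus\{x^{(k-1)}_{i_k}\}$. A set $\mathcal Y^*\subseteq\mathcal Y$ is globally BR-reachable if from every profile there is a BR-path to some element of $\mathcal Y^*$; BR-invariant if there is no BR-path from an element of $\mathcal Y^*$ to an element outside; globally BR-stable if both. *)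

(* Defs.v *)
From mathcomp Require Import all_boot all_order all_algebra.
Set Implicit Arguments. Unset Strict Implicit. Unset Printing Implicit Defensive.
Import Order.TTheory GRing.Theory Num.Theory.
Local Open Scope ring_scope.

(* Actions {-1,+1} are encoded by bool: true = +1, false = -1. *)
Definition sgnb {R : numDomainType} (b : bool) : R := if b then 1 else -1.

Section Games.
Variables (R : numDomainType) (P : finType).
Definition game := P -> {ffun P -> bool} -> R.

Definition upd (x : {ffun P -> bool}) (i : P) (b : bool) : {ffun P -> bool} :=
  [ffun j => if j == i then b else x j].

Definition best_resp (u : game) (i : P) (x : {ffun P -> bool}) (b : bool) : Prop :=
  forall b', u i (upd x i b') <= u i (upd x i b).

Definition nash (u : game) (x : {ffun P -> bool}) : Prop :=
  forall i, best_resp u i x (x i).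

Definition br_step (u : game) (x y : {ffun P -> bool}) : Prop :=
  exists i, (forall j, j != i -> y j = x j) /\ best_resp u i x (y i) /\ y i != x i.

Inductive br_path (u : game) : {ffun P -> bool} -> {ffun P -> bool} -> Prop :=
| br_path_nil x : br_path u x x
| br_path_cons x y z : br_step u x y -> br_path u y z -> br_path u x z.

Definition glob_br_reachable (u : game) (Y : {ffun P -> bool} -> Prop) : Prop :=
  forall x, exists y, Y y /\ br_path u x y.

Definition br_invariant (u : game) (Y : {ffun P -> bool} -> Prop) : Prop :=
  forall x y, Y x -> br_path u x y -> Y y.

Definition glob_br_stable (u : game) (Y : {ffun P -> bool} -> Prop) : Prop :=
  glob_br_reachable u Y /\ br_invariant u Y.
End Games.

Section Networks.
Variables (R : numDomainType) (V : finType) (W : V -> V -> R).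

Definition wsum (i : V) (B : {set V}) : R := \sum_(j in B) `|W i j|.

Definition indecomposable (U : {set V}) (hm hp : V -> R) : Prop :=
  forall Um Up : {set V}, Um :|: Up = U -> [disjoint Um & Up] ->
    Um != set0 -> Up != set0 ->
    exists i, (i \in Up /\ wsum i Up + hp i < wsum i Um) \/
              (i \in Um /\ wsum i Um - hm i < wsum i Up).

Definition snc_game (h : V -> R) : game R V :=
  fun i x => h i * sgnb (x i) + sgnb (x i) * \sum_j W i j * sgnb (x j).

Definition merge (Rs Ss : {set V}) (y : {ffun {v : V | v \in Rs} -> bool})
  (z : {ffun {v : V | v \in Ss} -> bool}) : {ffun V -> bool} :=
  [ffun v => match (insub v : option {v : V | v \in Ss}) with
             | Some s => z s
             | None => match (insub v : option {v : V | v \in Rs}) with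
                       | Some r => y r
                       | None => false end end].

Definition restricted_game (h : V -> R) (Rs Ss : {set V})
  (y : {ffun {v : V | v \in Rs} -> bool}) : game R {v : V | v \in Ss} :=
  fun i z => snc_game h (val i) (merge y z).
End Networks.

(* Main.v *)
Require Import Defs.
From mathcomp Require Import all_boot all_order all_algebra.
From mathcomp Require Import lra zify.
From Stdlib Require Import Lia.
Set Implicit Arguments. Unset Strict Implicit. Unset Printing Implicit Defensive.
Import Order.TTheory GRing.Theory Num.Theory.
Local Open Scope ring_scope.

Section S.
Variables (R : realFieldType) (V : finType) (W : V -> V -> R) (h : V -> R) (Rs Ss : {set V}).
Hypothesis W0 : forall i, W i i = 0.
Hypothesis RSU : Rs :|: Ss = [set: V].
Hypothesis RSD : [disjoint Rs & Ss].
Hypothesis Wpos : forall i j, i \in Rs -> j \in Rs -> 0 <= W i j.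
Hypothesis Hind : indecomposable W Rs (fun i => h i - wsum W i Ss) (fun i => h i + wsum W i Ss).
Hypothesis Hdom : forall i, i \in Rs -> wsum W i Rs - `|h i| > wsum W i Ss.

Definition F (x : {ffun V -> bool}) i := h i + \sum_j W i j * sgnb (x j).
Notation u := (snc_game W h).

Lemma sgnb_norm (b : bool) : `|sgnb b : R| = 1.
Proof. by case: b; rewrite /sgnb ?normrN normr1. Qed.

Lemma u_upd x i b : u i (upd x i b) = sgnb b * F x i.
Proof.
rewrite /snc_game /F ffunE eqxx mulrDr mulrC; congr (_ + _ * _).
apply: eq_bigr => j _; rewrite ffunE; case: eqP => [->|//].
by rewrite W0 !mul0r.
Qed.

Lemma br_char i x b : best_resp u i x b <-> 0 <= sgnb b * F x i.
Proof.
split.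
  move=> H; have := H (~~ b); clear H; rewrite !u_upd; case: b => /=; rewrite /sgnb; lra.
move=> H b'; rewrite !u_upd; move: H; case: b; case: b'; rewrite /sgnb /=; lra.
Qed.

Lemma notR_S k : k \notin Rs -> k \in Ss.
Proof.
move=> kR; have : k \in Rs :|: Ss by rewrite RSU inE.
by rewrite inE (negbTE kR).
Qed.

Lemma F_dec x i : i \in Rs -> exists sg, `|sg| <= wsum W i Ss /\
  F x i = h i + wsum W i [set j in Rs | x j] - wsum W i [set j in Rs | ~~ x j] + sg.
Proof.
move=> iR; exists (\sum_(j in Ss) W i j * sgnb (x j)); split.
  apply: le_trans (ler_norm_sum _ _ _) _; rewrite /wsum; apply: ler_sum => j _.
  by rewrite normrM sgnb_norm mulr1.
rewrite /F (bigID (fun j => j \in Rs)) /= -!addrA; congr (_ + _).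
rewrite (bigID (fun j => x j)) /= -!addrA; congr (_ + _).
  rewrite /wsum; apply: eq_big => j; first by rewrite inE andbC.
  by move=> /andP[jR ->]; rewrite mulr1 ger0_norm ?Wpos.
congr (_ + _).
  rewrite /wsum -sumrN; apply: eq_big => j; first by rewrite inE andbC.
  by move=> /andP[jR /negbTE ->]; rewrite /sgnb mulrN1 ger0_norm ?Wpos.
apply: eq_bigl => j; apply/idP/idP.
  by move/notR_S.
by move=> jS; apply/negP => jR; rewrite (disjointFr RSD jR) in jS.
Qed.

Lemma cons_pos (x : {ffun V -> bool}) a : (forall k, k \in Rs -> x k = a) ->
  forall i, i \in Rs -> 0 < sgnb a * F x i.
Proof.
move=> Hc i iR; have [sg [Hsg ->]] := F_dec x iR.
have H1 := Hdom iR; have H2 := ler_norm (h i); have H3 := ler_norm (- h i); rewrite normrN in H3.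
have H4 := ler_norm sg; have H5 := ler_norm (- sg); rewrite normrN in H5.
case: a Hc => Hc.
  have -> : [set j in Rs | x j] = Rs by apply/setP => j; rewrite inE andb_idr // => /Hc ->.
  have -> : [set j in Rs | ~~ x j] = set0 by apply/setP => j; rewrite !inE; apply/negP => /andP[/Hc ->].
  rewrite [wsum _ _ set0]/wsum big_set0 /sgnb /=; lra.
have -> : [set j in Rs | x j] = set0 by apply/setP => j; rewrite !inE; apply/negP => /andP[/Hc ->].
have -> : [set j in Rs | ~~ x j] = Rs by apply/setP => j; rewrite inE andb_idr // => /Hc ->.
rewrite [wsum _ _ set0]/wsum big_set0 /sgnb /=; lra.
Qed.


Lemma F_mono (x : {ffun V -> bool}) i k : i \in Rs -> k \in Rs -> F x k <= F (upd x i true) k.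
Proof.
move=> iR kR; rewrite /F lerD2l; apply: ler_sum => j _; rewrite ffunE.
case: eqP => [->|_] //; apply: ler_wpM2l; first exact: Wpos.
by case: (x i); rewrite /sgnb //; lra.
Qed.

Lemma step_ok (x : {ffun V -> bool}) i b : b != x i -> 0 <= sgnb b * F x i -> br_step u x (upd x i b).
Proof.
move=> bx H; exists i; split; first by move=> j /negbTE ji; rewrite ffunE ji.
by rewrite ffunE eqxx; split=> //; apply/br_char.
Qed.

Lemma br_path_trans (P : finType) (g : game R P) x y z :
  br_path g x y -> br_path g y z -> br_path g x z.
Proof. by elim=> // x1 y1 z1 s _ IH /IH; apply: br_path_cons. Qed.

Definition Up (x : {ffun V -> bool}) := [set j in Rs | x j].
Definition Um (x : {ffun V -> bool}) := [set j in Rs | ~~ x j].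

Lemma phase2 n : forall x, #|Um x| = n -> (forall k, k \in Rs -> x k -> 0 < F x k) ->
  (exists k, (k \in Rs) && x k) ->
  exists y : {ffun V -> bool}, (forall k, k \in Rs -> y k = true) /\ br_path u x y.
Proof.
elim: n => [|n IH] x Hn Hp [k0 /andP[k0R xk0]].
  exists x; split; last exact: br_path_nil.
  move=> k kR; apply/negPn/negP => xk.
  have : k \in Um x by rewrite inE kR.
  by move/card0_eq: Hn => ->.
have [i iUm] : exists i, i \in Um x.
  by apply/set0Pn; rewrite -card_gt0 Hn.
have HU : Um x :|: Up x = Rs.
  by apply/setP => j; rewrite !inE; case: (x j); rewrite ?andbT ?andbF ?orbF.
have HD : [disjoint Um x & Up x].
  by rewrite -setI_eq0; apply/eqP/setP => j; rewrite !inE; case: (x j); rewrite ?andbF.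
have Hm : Um x != set0 by apply/set0Pn; exists i.
have Hpl : Up x != set0 by apply/set0Pn; exists k0; rewrite inE k0R.
have [j [[jUp Hj]|[jUm Hj]]] := Hind HU HD Hm Hpl.
  have jR : j \in Rs by move: jUp; rewrite inE => /andP[].
  have xj : x j by move: jUp; rewrite inE => /andP[].
  have := Hp j jR xj; have [sg [Hsg ->]] := F_dec x jR.
  have H4 := ler_norm sg; have H5 := ler_norm (- sg); rewrite normrN in H5.
  rewrite /Up /Um in Hj *; lra.
have jR : j \in Rs by move: jUm; rewrite inE => /andP[].
have xj : x j = false by move: jUm; rewrite inE => /andP[_ /negbTE].
have Fj : 0 < F x j.
  have [sg [Hsg ->]] := F_dec x jR.
  have H4 := ler_norm sg; have H5 := ler_norm (- sg); rewrite normrN in H5.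
  rewrite /Up /Um in Hj *; lra.
have st : br_step u x (upd x j true).
  by apply: step_ok; rewrite ?xj // /sgnb mul1r ltW.
have P1 : #|Um (upd x j true)| = n.
  have : Um (upd x j true) = Um x :\ j.
    by apply/setP => k; rewrite !inE ffunE; case: eqP => [->|] //=; rewrite andbF.
  move=> E; move: Hn; rewrite (cardsD1 j) jUm E; lia.
have P2 : forall k, k \in Rs -> upd x j true k -> 0 < F (upd x j true) k.
  move=> k kR; rewrite ffunE; case: eqP => [->|_] xk.
    exact: lt_le_trans Fj (F_mono _ jR jR).
  exact: lt_le_trans (Hp k kR xk) (F_mono _ jR kR).
have P3 : exists k, (k \in Rs) && upd x j true k by exists j; rewrite jR ffunE eqxx.
have [y [Hy p]] := IH _ P1 P2 P3.
by exists y; split=> //; apply: br_path_cons st p.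
Qed.


Lemma phase1 n : forall x, #|Up x| = n ->
  exists a (y : {ffun V -> bool}), (forall k, k \in Rs -> y k = a) /\ br_path u x y.
Proof.
elim: n => [|n IH] x Hn.
  exists false, x; split; last exact: br_path_nil.
  move=> k kR; apply/negP => xk.
  have : k \in Up x by rewrite inE kR.
  by move/card0_eq: Hn => ->.
case: (pickP (fun k => [&& k \in Rs, x k & F x k <= 0])) => [k /and3P[kR xk Fk]|Hno].
  have st : br_step u x (upd x k false).
    by apply: step_ok; rewrite ?xk // /sgnb mulN1r oppr_ge0.
  have P1 : #|Up (upd x k false)| = n.
    have : Up (upd x k false) = Up x :\ k.
      by apply/setP => j; rewrite !inE ffunE; case: eqP => [->|] //=; rewrite andbF.
    have kU : k \in Up x by rewrite inE kR.
    move=> E; move: Hn; rewrite (cardsD1 k) kU E; lia.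
  have [a [y [Hy p]]] := IH _ P1.
  by exists a, y; split=> //; apply: br_path_cons st p.
have Hp : forall k, k \in Rs -> x k -> 0 < F x k.
  by move=> k kR xk; have := Hno k; rewrite kR xk /= => /negbT; rewrite -ltNge.
have [k0 k0U] : exists k, k \in Up x by apply/set0Pn; rewrite -card_gt0 Hn.
have [|y [Hy p]] := phase2 (erefl #|Um x|) Hp.
  by exists k0; move: k0U; rewrite inE.
by exists true, y.
Qed.


Definition Y (a : bool) : {ffun {v : V | v \in Rs} -> bool} := [ffun _ : {v : V | v \in Rs} => a].
Definition proj (x : {ffun V -> bool}) := [ffun s : {v : V | v \in Ss} => x (val s)].
Notation rg y := (@restricted_game R V W h Rs Ss y).
Notation mg := (@Defs.merge V Rs Ss).

Lemma merge_S y z (v : {v : V | v \in Ss}) : mg y z (val v) = z v.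
Proof. by rewrite ffunE valK. Qed.

Lemma merge_R a z v : v \in Rs -> mg (Y a) z v = a.
Proof.
move=> vR; rewrite ffunE; case: insubP => [u0 uS E|_].
  by rewrite (disjointFr RSD vR) in uS.
by case: insubP => [u0 _ _|]; [rewrite ffunE | rewrite vR].
Qed.

Lemma merge_proj a (x : {ffun V -> bool}) : (forall k, k \in Rs -> x k = a) -> mg (Y a) (proj x) = x.
Proof.
move=> Hc; apply/ffunP => v; case: (boolP (v \in Rs)) => vR.
  by rewrite merge_R // Hc.
have vS := notR_S vR.
by rewrite -[v]/(val (Sub v vS : {v : V | v \in Ss})) merge_S ffunE.
Qed.

Lemma proj_merge y z : proj (mg y z) = z.
Proof. by apply/ffunP => s; rewrite ffunE merge_S. Qed.

Lemma merge_upd y z i b : mg y (upd z i b) = upd (mg y z) (val i) b.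
Proof.
apply/ffunP => v; rewrite [RHS]ffunE; case: (boolP (v \in Ss)) => vS.
  rewrite -[v]/(val (Sub v vS : {v : V | v \in Ss})) !merge_S ffunE.
  by rewrite -(inj_eq val_inj).
have -> : (v == val i) = false by apply/eqP => E; move: vS; rewrite E (valP i).
rewrite !ffunE; case: insubP => [u0 uS E|_] //.
by rewrite uS in vS.
Qed.

Lemma rbr_char (y : {ffun {v : V | v \in Rs} -> bool}) i z b : best_resp (rg y) i z b <-> best_resp u (val i) (mg y z) b.
Proof.
split=> H b'; have := H b'; by rewrite /restricted_game !merge_upd.
Qed.


Lemma lift_path y z z' : br_path (rg y) z z' -> br_path u (mg y z) (mg y z').
Proof.
elim=> [z0|z0 z1 z2 [i [Hj [Hb Hne]]] _ IH]; first exact: br_path_nil.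
apply: br_path_cons IH; exists (val i); split.
  move=> j ji; rewrite !ffunE; case: insubP => [u0 _ E|_] //.
  by rewrite Hj // -(inj_eq val_inj) E.
rewrite merge_S; split; first by apply/rbr_char.
by rewrite merge_S.
Qed.

Lemma proj_path x x' : br_path u x x' -> forall a, (forall k, k \in Rs -> x k = a) ->
  (forall k, k \in Rs -> x' k = a) /\ br_path (rg (Y a)) (proj x) (proj x').
Proof.
elim=> [x0|x0 x1 x2 [k [Hj [Hb Hne]]] _ IH] a Hc.
  by split=> //; apply: br_path_nil.
case: (boolP (k \in Rs)) => kR.
  move/br_char: Hb; have := cons_pos Hc kR; move: Hne; rewrite (Hc k kR).
  by case: a {Hc IH}; case: (x1 k); rewrite /sgnb /=; lra.
have Hc1 : forall j, j \in Rs -> x1 j = a.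
  by move=> j jR; rewrite Hj ?Hc //; apply: contraNneq kR => <-.
have [H1 H2] := IH a Hc1; split=> //; apply: br_path_cons H2.
have kS := notR_S kR.
exists (Sub k kS); split.
  move=> j jk; rewrite !ffunE Hj //; apply: contra jk => /eqP E.
split; last by rewrite !ffunE SubK.
by apply/rbr_char; rewrite (merge_proj Hc) !ffunE SubK.
Qed.

Lemma nash_merge a z : nash (rg (Y a)) z -> nash u (mg (Y a) z).
Proof.
move=> Hn i; case: (boolP (i \in Rs)) => iR.
  rewrite merge_R //; apply/br_char; apply: ltW; apply: (cons_pos _ iR).
  by move=> k kR; rewrite merge_R.
have iS := notR_S iR.
rewrite -[i]/(val (Sub i iS : {v : V | v \in Ss})) merge_S.
exact/rbr_char.
Qed.


Lemma reach_cons x : exists a (y : {ffun V -> bool}),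
  (forall k, k \in Rs -> y k = a) /\ br_path u x y.
Proof. exact: (phase1 (erefl #|Up x|)). Qed.

Lemma main_thm : 
  let Ntilde := fun x : {ffun V -> bool} =>
    nash (snc_game W h) x /\ exists a : bool, forall i, i \in Rs -> x i = a in
  ((forall a : bool,
      glob_br_reachable (@restricted_game R V W h Rs Ss [ffun _ => a])
        (nash (@restricted_game R V W h Rs Ss [ffun _ => a]))) ->
    (exists x, Ntilde x) /\ glob_br_reachable (snc_game W h) Ntilde)
  /\
  ((forall a : bool, exists Nbar : {ffun {v : V | v \in Ss} -> bool} -> Prop,
      (forall z, Nbar z -> nash (@restricted_game R V W h Rs Ss [ffun _ => a]) z) /\
      (exists z, Nbar z) /\
      glob_br_stable (@restricted_game R V W h Rs Ss [ffun _ => a]) Nbar) ->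
    exists Nbar : {ffun V -> bool} -> Prop,
      (forall x, Nbar x -> Ntilde x) /\ (exists x, Nbar x) /\
      glob_br_stable (snc_game W h) Nbar).
Proof.
move=> Nt.
have NtI : forall a z, nash (rg (Y a)) z -> Nt (mg (Y a) z).
  move=> a z Hz; split; first exact: nash_merge.
  by exists a => k kR; rewrite merge_R.
split.
  move=> Hr; split.
    have [z [Hz _]] := Hr true [ffun => false].
    by exists (mg (Y true) z); apply: NtI.
  move=> x; have [a [y [Hy p]]] := reach_cons x.
  have [z [Hz pz]] := Hr a (proj y).
  exists (mg (Y a) z); split; first exact: NtI.
  apply: br_path_trans p _; rewrite -{1}(merge_proj Hy).
  exact: lift_path.
move=> HN.
have [N1 [N1n [[z1 z1N] [N1r N1i]]]] := HN true.
have [N0 [N0n [[z0 z0N] [N0r N0i]]]] := HN false.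
pose NN (a : bool) := if a then N1 else N0.
have NNn : forall a z, NN a z -> nash (rg (Y a)) z by case=> /=.
have NNr : forall a, glob_br_reachable (rg (Y a)) (NN a) by case.
have NNi : forall a, br_invariant (rg (Y a)) (NN a) by case.
exists (fun x : {ffun V -> bool} => exists a, (forall k, k \in Rs -> x k = a) /\ NN a (proj x)).
split.
  move=> x [a [Hc Hx]]; rewrite -(merge_proj Hc); apply: NtI; exact: NNn.
split.
  exists (mg (Y true) z1), true; split; first by move=> k kR; rewrite merge_R.
  by rewrite proj_merge.
split.
  move=> x; have [a [y [Hy p]]] := reach_cons x.
  have [z [Hz pz]] := NNr a (proj y).
  exists (mg (Y a) z); split.
    by exists a; split; [move=> k kR; rewrite merge_R | rewrite proj_merge].
  apply: br_path_trans p _; rewrite -{1}(merge_proj Hy).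
  exact: lift_path.
move=> x y [a [Hc Hx]] p.
have [Hc' p'] := proj_path p Hc.
by exists a; split=> //; apply: NNi Hx p'.
Qed.

End S.

Unset Implicit Arguments.
Set Strict Implicit.

Theorem proposition5 (R : realFieldType) (V : finType) (W : V -> V -> R)
  (h : V -> R) (Rs Ss : {set V}) :
  (forall i, W i i = 0) ->
  Rs :|: Ss = [set: V] -> [disjoint Rs & Ss] -> Rs != set0 ->
  (forall i j, i \in Rs -> j \in Rs -> 0 <= W i j) ->
  indecomposable W Rs (fun i => h i - wsum W i Ss) (fun i => h i + wsum W i Ss) ->
  (forall i, i \in Rs -> wsum W i Rs - `|h i| > wsum W i Ss) ->
  let Ntilde := fun x : {ffun V -> bool} =>
    nash (snc_game W h) x /\ exists a : bool, forall i, i \in Rs -> x i = a in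
  ((forall a : bool,
      glob_br_reachable (@restricted_game R V W h Rs Ss [ffun _ => a])
        (nash (@restricted_game R V W h Rs Ss [ffun _ => a]))) ->
    (exists x, Ntilde x) /\ glob_br_reachable (snc_game W h) Ntilde)
  /\
  ((forall a : bool, exists Nbar : {ffun {v : V | v \in Ss} -> bool} -> Prop,
      (forall z, Nbar z -> nash (@restricted_game R V W h Rs Ss [ffun _ => a]) z) /\
      (exists z, Nbar z) /\
      glob_br_stable (@restricted_game R V W h Rs Ss [ffun _ => a]) Nbar) ->
    exists Nbar : {ffun V -> bool} -> Prop,
      (forall x, Nbar x -> Ntilde x) /\ (exists x, Nbar x) /\
      glob_br_stable (snc_game W h) Nbar).
Proof.
move=> W0 RSU RSD _ Wpos Hind Hdom.
exact: (main_thm W0 RSU RSD Wpos Hind Hdom).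
Qed.
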